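(* Under the standing setting, if $f_0\in(0,\infty]$ and $f_\infty\in(0,\infty]$, then there exists $\underline\lambda>0$ such that problem (P$_\lambda$) has no positive solution for any $\lambda>\underline\lambda$.
   Context: Standing setting. $\varphi:\mathbb{R}\to\mathbb{R}$ is an odd, increasing homeomorphism satisfying condition (A): there exist increasing homeomorphisms $\psi_1,\psi_2:[0,\infty)\to[0,\infty)$ such that $\varphi(x)\psi_1(y)\le \varphi(xy)\le \varphi(x)\psi_2(y)$ for all $x,y\ge 0$. Let $c,d\in C([0,1],(0,\infty))$, and $\|\cdot\|_\infty$ the maximum norm on $C[0,1]$. Let $f\in C([0,\infty),[0,\infty))$ with $f(s)>0$ for $s>0$, and write $f_0=\lim_{s\to0^+}f(s)/\varphi(s)$, $f_\infty=\lim_{s\to\infty}f(s)/\varphi(s)$ (assumed to exist in $[0,\infty]$ whenever referred to). Let $h\in C((0,1),[0,\infty))$, $h\not\equiv 0$, with $\int_0^{1/2}\psi_1^{-1}\big(\int_s^{1/2}h(\tau)d\tau\big)ds+\int_{1/2}^1\psi_1^{-1}\big(\int_{1/2}^s h(\tau)d\tau\big)ds<\infty$. Notation attached to $h$: $\alpha_h=\sup\{x\in(0,1): h=0 \text{ on }(0,x)\}$ ($0$ if empty); $\beta_h=\inf\{x\in(0,1): h=0\text{ on }(x,1)\}$ ($1$ if empty); $\bar\alpha_h=\sup\{x\in(\alpha_h,1]: h>0 \text{ on }(\alpha_h,x)\}$; $\bar\beta_h=\inf\{x\in[0,\beta_h): h>0\text{ on }(x,\beta_h)\}$; $\gamma_h^1=(3\alpha_h+\bar\alpha_h)/4$,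 $\gamma_h^2=(\bar\beta_h+3\beta_h)/4$. It is assumed that $0\le\alpha_h<\gamma_h^1<\gamma_h^2<\beta_h\le 1$. For $\lambda\ge0$, problem (P$_\lambda$) is: $(d(t)\varphi(c(t)u'(t)))'+\lambda h(t)f(u(t))=0$ for $t\in(0,1)$, $u(0)=u(1)=0$. A solution is $u\in C[0,1]\cap C^1(0,1)$ such that $t\mapsto d(t)\varphi(c(t)u'(t))$ is continuously differentiable on $(0,1)$ and the equation and boundary conditions hold; it is positive if $u(t)>0$ for all $t\in(0,1)$. *)

(* Defs.v *)
From Stdlib Require Import Reals Lra ClassicalEpsilon.
Open Scope R_scope.

Definition cont_on_cc (f : R -> R) (a b : R) : Prop :=
  forall x, a <= x <= b -> continue_in f (fun y => a <= y <= b) x.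

Definition cont_on_nonneg (f : R -> R) : Prop :=
  forall x, 0 <= x -> continue_in f (fun y => 0 <= y) x.

Definition odd_inc_homeo (phi : R -> R) : Prop :=
  (forall x, phi (- x) = - phi x) /\
  (forall x y, x < y -> phi x < phi y) /\
  continuity phi /\
  (forall y, exists x, phi x = y).

(* psi : [0,oo) -> [0,oo) increasing homeomorphism (values outside [0,oo) irrelevant) *)
Definition inc_homeo_nonneg (psi : R -> R) : Prop :=
  (forall x, 0 <= x -> 0 <= psi x) /\
  (forall x y, 0 <= x -> x < y -> psi x < psi y) /\
  cont_on_nonneg psi /\
  (forall y, 0 <= y -> exists x, 0 <= x /\ psi x = y).

Definition condA (phi psi1 psi2 : R -> R) : Prop :=
  inc_homeo_nonneg psi1 /\ inc_homeo_nonneg psi2 /\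
  (forall x y, 0 <= x -> 0 <= y ->
     phi x * psi1 y <= phi (x * y) /\ phi (x * y) <= phi x * psi2 y).

(* inverse of psi on [0,oo) (unique when psi is a homeomorphism of [0,oo)) *)
Definition inv_nonneg (psi : R -> R) (y : R) : R :=
  epsilon (inhabits 0) (fun x => 0 <= x /\ psi x = y).

(* Riemann integral of f over [a,b] (the value RiemannInt when integrable) *)
Definition RInt (f : R -> R) (a b : R) : R :=
  epsilon (inhabits 0) (fun v => exists pr : Riemann_integrable f a b, RiemannInt pr = v).

(* finiteness of the improper integral of a nonnegative g on (a,b] *)
Definition improper_finite_left (g : R -> R) (a b : R) : Prop :=
  exists M, forall x, a < x <= b ->
    exists pr : Riemann_integrable g x b, RiemannInt pr <= M.

(* finiteness of the improper integral of a nonnegative g on [a,b) *)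
Definition improper_finite_right (g : R -> R) (a b : R) : Prop :=
  exists M, forall y, a <= y < b ->
    exists pr : Riemann_integrable g a y, RiemannInt pr <= M.

Definition h_integrability (psi1 h : R -> R) : Prop :=
  improper_finite_left (fun s => inv_nonneg psi1 (RInt h s (1/2))) 0 (1/2) /\
  improper_finite_right (fun s => inv_nonneg psi1 (RInt h (1/2) s)) (1/2) 1.

Definition is_glb (S : R -> Prop) (m : R) : Prop :=
  (forall x, S x -> m <= x) /\ (forall m', (forall x, S x -> m' <= x) -> m' <= m).

(* alpha_h = sup {x in (0,1) : h = 0 on (0,x)}, 0 if empty *)
Definition alpha_set (h : R -> R) (x : R) : Prop :=
  0 < x < 1 /\ forall t, 0 < t < x -> h t = 0.
Definition is_alpha_h (h : R -> R) (a : R) : Prop :=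
  ((forall x, ~ alpha_set h x) /\ a = 0) \/
  ((exists x, alpha_set h x) /\ is_lub (alpha_set h) a).

(* beta_h = inf {x in (0,1) : h = 0 on (x,1)}, 1 if empty *)
Definition beta_set (h : R -> R) (x : R) : Prop :=
  0 < x < 1 /\ forall t, x < t < 1 -> h t = 0.
Definition is_beta_h (h : R -> R) (b : R) : Prop :=
  ((forall x, ~ beta_set h x) /\ b = 1) \/
  ((exists x, beta_set h x) /\ is_glb (beta_set h) b).

Definition abar_set (h : R -> R) (a x : R) : Prop :=
  a < x <= 1 /\ forall t, a < t < x -> 0 < h t.
Definition is_abar_h (h : R -> R) (a ab : R) : Prop := is_lub (abar_set h a) ab.

Definition bbar_set (h : R -> R) (b x : R) : Prop :=
  0 <= x < b /\ forall t, x < t < b -> 0 < h t.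
Definition is_bbar_h (h : R -> R) (b bb : R) : Prop := is_glb (bbar_set h b) bb.

(* standing assumption 0 <= alpha_h < gamma_h^1 < gamma_h^2 < beta_h <= 1 *)
Definition h_gamma_assumption (h : R -> R) : Prop :=
  exists a b ab bb,
    is_alpha_h h a /\ is_beta_h h b /\ is_abar_h h a ab /\ is_bbar_h h b bb /\
    0 <= a /\ a < (3 * a + ab) / 4 /\ (3 * a + ab) / 4 < (bb + 3 * b) / 4 /\
    (bb + 3 * b) / 4 < b /\ b <= 1.

Definition lim_at_0plus (g : R -> R) (L : R) : Prop :=
  forall eps, 0 < eps -> exists del, 0 < del /\
    forall s, 0 < s < del -> Rabs (g s - L) < eps.
Definition tends_pinf_at_0plus (g : R -> R) : Prop :=
  forall M, exists del, 0 < del /\ forall s, 0 < s < del -> M < g s.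
Definition lim_at_pinf (g : R -> R) (L : R) : Prop :=
  forall eps, 0 < eps -> exists N, forall s, N < s -> Rabs (g s - L) < eps.
Definition tends_pinf_at_pinf (g : R -> R) : Prop :=
  forall M, exists N, forall s, N < s -> M < g s.

Definition f0_pos (phi f : R -> R) : Prop :=
  (exists L, 0 < L /\ lim_at_0plus (fun s => f s / phi s) L) \/
  tends_pinf_at_0plus (fun s => f s / phi s).
Definition finf_pos (phi f : R -> R) : Prop :=
  (exists L, 0 < L /\ lim_at_pinf (fun s => f s / phi s) L) \/
  tends_pinf_at_pinf (fun s => f s / phi s).

Definition is_solution (phi c d h f : R -> R) (lam : R) (u : R -> R) : Prop :=
  cont_on_cc u 0 1 /\
  exists u' : R -> R,
    (forall t, 0 < t < 1 -> derivable_pt_lim u t (u' t)) /\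
    (forall t, 0 < t < 1 -> continuity_pt u' t) /\
    exists w' : R -> R,
      (forall t, 0 < t < 1 ->
         derivable_pt_lim (fun s => d s * phi (c s * u' s)) t (w' t)) /\
      (forall t, 0 < t < 1 -> continuity_pt w' t) /\
      (forall t, 0 < t < 1 -> w' t + lam * h t * f (u t) = 0) /\
      u 0 = 0 /\ u 1 = 0.

Definition is_positive_solution (phi c d h f : R -> R) (lam : R) (u : R -> R) : Prop :=
  is_solution phi c d h f lam u /\ (forall t, 0 < t < 1 -> 0 < u t).

(* Main.v *)
Require Import Defs.
From Stdlib Require Import Reals Lra.
Open Scope R_scope.

Lemma cont_interior (g : R -> R) (D : R -> Prop) (x e : R) :
  continue_in g D x -> 0 < e -> (forall y, Rabs (y - x) < e -> D y) ->
  continuity_pt g x.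
Proof.
  intros H He HD eps Heps.
  destruct (H eps Heps) as [alp [Halp H2]].
  exists (Rmin alp e). split. { apply Rmin_pos; lra. }
  intros y [[_ Hyx] Hd]. apply H2. split.
  - split; [|exact Hyx]. apply HD. simpl in Hd. unfold R_dist in Hd.
    pose proof (Rmin_r alp e). lra.
  - simpl in *. pose proof (Rmin_l alp e). lra.
Qed.

Section Phi.
Variable phi : R -> R.
Hypothesis Hphi : odd_inc_homeo phi.

Lemma phi0 : phi 0 = 0.
Proof. destruct Hphi as [Ho _]. pose proof (Ho 0). rewrite Ropp_0 in H. lra. Qed.

Lemma phi_le x y : x <= y -> phi x <= phi y.
Proof. destruct Hphi as [_ [Hi _]]. intros [H|H]. left; auto. subst; lra. Qed.

Lemma phi_pos x : 0 < x -> 0 < phi x.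
Proof. destruct Hphi as [_ [Hi _]]. intros H. rewrite <- phi0. auto. Qed.

Lemma phi_nonneg_inv x : 0 <= phi x -> 0 <= x.
Proof. intros H. destruct (Rle_or_lt 0 x); auto.
  destruct Hphi as [_ [Hi _]]. pose proof (Hi _ _ H0). rewrite phi0 in H1. lra. Qed.

Lemma phi_neg_inv x : phi x < 0 -> x < 0.
Proof. intros H. destruct (Rle_or_lt 0 x); auto.
  pose proof (phi_le _ _ H0). rewrite phi0 in H1. lra. Qed.
End Phi.

Lemma f_lower (phi f : R -> R) : odd_inc_homeo phi -> cont_on_nonneg f ->
  (forall s, 0 < s -> 0 < f s) -> f0_pos phi f -> finf_pos phi f ->
  exists mf, 0 < mf /\ forall s, 0 < s -> mf * phi s <= f s.
Proof.
  intros Hphi Hfc Hfp Hf0 Hfi.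
  set (g := fun s => f s / phi s).
  assert (Hgpos : forall s, 0 < s -> 0 < g s).
  { intros s Hs. unfold g. apply Rdiv_lt_0_compat; auto. apply phi_pos; auto. }
  assert (H1 : exists k1 d1, 0 < k1 /\ 0 < d1 /\ forall s, 0 < s < d1 -> k1 < g s).
  { destruct Hf0 as [[L [HL Hl]]|Ht].
    - destruct (Hl (L/2)) as [del [Hd Hs]]. lra.
      exists (L/2), del. repeat split; try lra. intros s Hs'. specialize (Hs s Hs').
      apply Rabs_def2 in Hs. unfold g. lra.
    - destruct (Ht 1) as [del [Hd Hs]]. exists 1, del. repeat split; try lra. exact Hs. }
  assert (H2 : exists k2 N, 0 < k2 /\ forall s, N < s -> k2 < g s).
  { destruct Hfi as [[L [HL Hl]]|Ht].
    - destruct (Hl (L/2)) as [N Hs]. lra.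
      exists (L/2), N. split; try lra. intros s Hs'. specialize (Hs s Hs').
      apply Rabs_def2 in Hs. unfold g. lra.
    - destruct (Ht 1) as [N Hs]. exists 1, N. split; try lra. exact Hs. }
  destruct H1 as [k1 [d1 [Hk1 [Hd1 Hg1]]]].
  destruct H2 as [k2 [N [Hk2 Hg2]]].
  set (B := Rmax N d1 + 1).
  assert (HB : d1 / 2 <= B). { unfold B. pose proof (Rmax_r N d1). lra. }
  assert (Hgc : forall c, d1/2 <= c <= B -> continuity_pt g c).
  { intros c Hc. unfold g.
    assert (Hfc' : continuity_pt f c).
    { apply (cont_interior f (fun y => 0 <= y) c c); [apply Hfc; lra| lra|].
      intros y Hy. apply Rabs_def2 in Hy. lra. }
    pose proof Hphi as Hphi2. destruct Hphi2 as [_ [_ [Hpc _]]].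
    assert (phi c <> 0). { pose proof (phi_pos phi Hphi c). lra. }
    exact (continuity_pt_div f phi c Hfc' (Hpc c) H). }
  destruct (continuity_ab_min g (d1/2) B HB Hgc) as [mx [Hmx Hmxr]].
  assert (Hgm : 0 < g mx) by (apply Hgpos; lra).
  exists (Rmin k1 (Rmin k2 (g mx))). split.
  { apply Rmin_pos; auto. apply Rmin_pos; auto. }
  intros s Hs.
  assert (Hps : 0 < phi s) by (apply phi_pos; auto).
  assert (Hgs : Rmin k1 (Rmin k2 (g mx)) <= g s).
  { pose proof (Rmin_l k1 (Rmin k2 (g mx))). pose proof (Rmin_r k1 (Rmin k2 (g mx))).
    pose proof (Rmin_l k2 (g mx)). pose proof (Rmin_r k2 (g mx)).
    destruct (Rlt_or_le s d1) as [Ha|Ha]. { pose proof (Hg1 s (conj Hs Ha)). lra. }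
    destruct (Rlt_or_le N s) as [Hb|Hb]. { pose proof (Hg2 s Hb). lra. }
    pose proof (Hmx s) as Hm. pose proof (Rmax_l N d1). pose proof (Rmax_r N d1).
    assert (Hr : d1/2 <= s <= B) by (unfold B; lra). specialize (Hm Hr). lra. }
  unfold g in Hgs.
  apply Rmult_le_compat_r with (r := phi s) in Hgs; [|lra].
  unfold Rdiv in Hgs. rewrite Rmult_assoc, Rinv_l in Hgs by lra. unfold g. lra.
Qed.

Lemma mvt01 (F F' : R->R) x y : 0<x -> x<y -> y<1 ->
  (forall t, 0<t<1 -> derivable_pt_lim F t (F' t)) ->
  exists z, x<z<y /\ F y - F x = F' z * (y-x).
Proof.
  intros H1 H2 H3 HD. destruct (MVT_cor2 F F' x y H2) as [z [Hz1 Hz2]].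
  intros t Ht; apply HD; lra. exists z; split; auto.
Qed.

Lemma bound_above (g : R -> R) p q : cont_on_cc g 0 1 -> 0 < p -> p <= q -> q < 1 ->
  exists C, forall t, p <= t <= q -> g t <= C.
Proof.
  intros Hg Hp Hpq Hq.
  assert (Hc : forall t, p <= t <= q -> continuity_pt g t).
  { intros t Ht. apply (cont_interior g (fun y => 0 <= y <= 1) t (Rmin t (1-t))).
    apply Hg; lra. apply Rmin_pos; lra.
    intros y Hy. apply Rabs_def2 in Hy. pose proof (Rmin_l t (1-t)). pose proof (Rmin_r t (1-t)). lra. }
  destruct (continuity_ab_maj g p q Hpq Hc) as [M [HM _]]. exists (g M). exact HM.
Qed.

Lemma key_ineq lam A B P : 0 < P -> 0 < A -> lam * A * P <= B * P -> lam <= B / A.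
Proof.
  intros HP HA H. apply Rmult_le_reg_r in H; auto.
  apply Rmult_le_reg_r with A; auto. unfold Rdiv. rewrite Rmult_assoc, Rinv_l; lra.
Qed.

Lemma prod_lower lam hx fx h0 mf P L : 0 <= lam -> 0 <= L -> h0 <= hx -> 0 <= h0 ->
  mf * P <= fx -> 0 <= mf * P ->
  lam * (h0 * mf * L) * P <= lam * hx * fx * L.
Proof.
  intros. assert (h0 * (mf * P) <= hx * fx) by (apply Rmult_le_compat; lra).
  assert (lam * (h0 * (mf * P)) <= lam * (hx * fx)) by (apply Rmult_le_compat_l; lra).
  assert (lam * (h0 * (mf * P)) * L <= lam * (hx * fx) * L) by (apply Rmult_le_compat_r; lra).
  replace (lam * (h0 * mf * L) * P) with (lam * (h0 * (mf * P)) * L) by ring.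
  replace (lam * hx * fx * L) with (lam * (hx * fx) * L) by ring. lra.
Qed.

Lemma upper_est phi psi1 psi2 v L x cx Cc dx Dd :
  odd_inc_homeo phi -> condA phi psi1 psi2 ->
  0 <= v -> 0 < L -> v * L <= x -> 0 < cx -> cx <= Cc -> 0 < dx -> dx <= Dd ->
  dx * phi (cx * v) <= Dd * psi2 (Cc / L) * phi x.
Proof.
  intros Hphi [_ [_ HA]] Hv HL Hvx Hc HC Hd HD.
  assert (Hx : 0 <= x) by nra.
  assert (HCL : 0 <= Cc / L) by (unfold Rdiv; apply Rmult_le_pos; [lra| left; apply Rinv_0_lt_compat; lra]).
  assert (H1 : cx * v <= x * (Cc / L)).
  { assert (v <= x / L). { apply Rmult_le_reg_r with L; auto. unfold Rdiv. rewrite Rmult_assoc, Rinv_l; lra. }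
    replace (x * (Cc / L)) with (Cc * (x / L)) by (field; lra).
    apply Rmult_le_compat; lra. }
  pose proof (phi_le phi Hphi _ _ H1) as H2.
  destruct (HA x (Cc / L) Hx HCL) as [_ H3].
  assert (H4 : 0 <= phi (cx * v)). { rewrite <- (phi0 phi Hphi). apply phi_le; auto. nra. }
  assert (dx * phi (cx * v) <= Dd * phi (cx * v)) by (apply Rmult_le_compat_r; lra).
  assert (Dd * phi (cx * v) <= Dd * (phi x * psi2 (Cc / L))) by (apply Rmult_le_compat_l; lra).
  lra.
Qed.

Theorem theorem3p7
  (phi psi1 psi2 c d f h : R -> R)
  (Hphi : odd_inc_homeo phi)
  (HA : condA phi psi1 psi2)
  (Hc_cont : cont_on_cc c 0 1) (Hc_pos : forall t, 0 <= t <= 1 -> 0 < c t)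
  (Hd_cont : cont_on_cc d 0 1) (Hd_pos : forall t, 0 <= t <= 1 -> 0 < d t)
  (Hf_cont : cont_on_nonneg f) (Hf_nonneg : forall s, 0 <= s -> 0 <= f s)
  (Hf_pos : forall s, 0 < s -> 0 < f s)
  (Hh_cont : forall t, 0 < t < 1 -> continuity_pt h t)
  (Hh_nonneg : forall t, 0 < t < 1 -> 0 <= h t)
  (Hh_nz : exists t, 0 < t < 1 /\ h t <> 0)
  (Hh_int : h_integrability psi1 h)
  (Hh_gamma : h_gamma_assumption h)
  (Hf0 : f0_pos phi f) (Hfinf : finf_pos phi f) :
  exists lam0, 0 < lam0 /\
    forall lam, lam0 < lam -> ~ exists u, is_positive_solution phi c d h f lam u.
Proof.
  destruct (f_lower phi f Hphi Hf_cont Hf_pos Hf0 Hfinf) as [mf [Hmf Hfl]].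
  destruct Hh_nz as [t0 [Ht0 Hht0]].
  assert (Hh0 : 0 < h t0) by (pose proof (Hh_nonneg t0 Ht0); lra).
  destruct (Hh_cont t0 Ht0 (h t0 / 2)) as [alp [Halp Hal]]. lra.
  set (r := Rmin alp (Rmin t0 (1 - t0)) / 2).
  assert (Hr : 0 < r /\ r < alp /\ r < t0 /\ r < 1 - t0).
  { unfold r. pose proof (Rmin_l alp (Rmin t0 (1-t0))). pose proof (Rmin_r alp (Rmin t0 (1-t0))).
    pose proof (Rmin_l t0 (1-t0)). pose proof (Rmin_r t0 (1-t0)).
    assert (0 < Rmin alp (Rmin t0 (1 - t0))) by (apply Rmin_pos; [lra| apply Rmin_pos; lra]).
    lra. }
  set (a := t0 - r). set (b := t0 + r). set (h0 := h t0 / 2).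
  assert (Hab : 0 < a /\ a < t0 /\ t0 < b /\ b < 1) by (unfold a, b; lra).
  assert (Hhb : forall t, a <= t <= b -> h0 <= h t).
  { intros t Ht. destruct (Req_dec t t0) as [->|Hne]. unfold h0; lra.
    assert (Rabs (h t - h t0) < h t0 / 2).
    { apply (Hal t). split. split; [exact I| auto]. simpl. unfold R_dist.
      apply Rabs_def1; unfold a, b in Ht; lra. }
    apply Rabs_def2 in H. unfold h0; lra. }
  destruct (bound_above c (a/2) ((1+b)/2) Hc_cont) as [Cc HCc]; try lra.
  destruct (bound_above d (a/2) ((1+b)/2) Hd_cont) as [Dd HDd]; try lra.
  set (K1 := Dd * psi2 (Cc / (a/2)) / (h0 * mf * (t0 - a))).
  set (K2 := Dd * psi2 (Cc / ((1-b)/2)) / (h0 * mf * (b - t0))).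
  exists (Rmax 0 (Rmax K1 K2) + 1). split.
  { pose proof (Rmax_l 0 (Rmax K1 K2)). lra. }
  intros lam Hlam [u [[Hucont [u' [Hu' [Hu'c [w' [Hw [Hw'c [Heq [Hu0 Hu1]]]]]]]]] Hupos]].
  pose proof (Rmax_l 0 (Rmax K1 K2)). pose proof (Rmax_r 0 (Rmax K1 K2)).
  pose proof (Rmax_l K1 K2). pose proof (Rmax_r K1 K2).
  assert (Hlam0 : 0 < lam) by lra.
  set (W := fun s => d s * phi (c s * u' s)).
  assert (Hw'neg : forall t, 0 < t < 1 -> w' t <= 0).
  { intros t Ht. pose proof (Heq t Ht). pose proof (Hh_nonneg t Ht).
    pose proof (Hf_nonneg (u t) (Rlt_le _ _ (Hupos t Ht))).
    assert (0 <= lam * h t * f (u t)) by (apply Rmult_le_pos; [apply Rmult_le_pos|]; lra).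
    lra. }
  assert (Wdec : forall x y, 0 < x -> x < y -> y < 1 -> W y <= W x).
  { intros x y Hx Hxy Hy. destruct (mvt01 W w' x y Hx Hxy Hy Hw) as [z [Hz Hz2]].
    pose proof (Hw'neg z ltac:(lra)). assert (w' z * (y - x) <= 0) by nra. lra. }
  assert (Hcd : forall t, 0 < t < 1 -> 0 < c t /\ 0 < d t).
  { intros t Ht; split; [apply Hc_pos | apply Hd_pos]; lra. }
  destruct (Rle_or_lt 0 (W t0)) as [HW|HW].
  -
    assert (Hu'pos : forall t, 0 < t <= t0 -> 0 <= u' t).
    { intros t Ht. assert (0 <= W t).
      { destruct (Req_dec t t0) as [->|Hne]; auto. pose proof (Wdec t t0). lra. }
      destruct (Hcd t ltac:(lra)) as [Hct Hdt]. unfold W in H3.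
      assert (0 <= phi (c t * u' t)).
      { apply Rmult_le_reg_l with (d t); auto. lra. }
      apply (phi_nonneg_inv phi Hphi) in H4. nra. }
    destruct (mvt01 W w' a t0) as [xi [Hxi HWxi]]; try lra; auto.
    destruct (mvt01 u u' a xi) as [eta [Heta Hueta]]; try lra; auto.
    assert (Huxi : u a <= u xi).
    { pose proof (Hu'pos eta ltac:(lra)). nra. }
    assert (Hlow : lam * (h0 * mf * (t0 - a)) * phi (u a) <= W a).
    { assert (Hwx : w' xi = - (lam * h xi * f (u xi))) by (pose proof (Heq xi ltac:(lra)); lra). rewrite Hwx in HWxi.
      assert (HP : mf * phi (u a) <= f (u xi)).
      { pose proof (Hfl (u xi) (Hupos xi ltac:(lra))).
        pose proof (phi_le phi Hphi _ _ Huxi). nra. }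
      assert (0 <= mf * phi (u a)).
      { pose proof (phi_pos phi Hphi (u a) (Hupos a ltac:(lra))). nra. }
      pose proof (prod_lower lam (h xi) (f (u xi)) h0 mf (phi (u a)) (t0 - a)
        ltac:(lra) ltac:(lra) (Hhb xi ltac:(lra)) ltac:(unfold h0; lra) HP H3).
      lra. }
    destruct (mvt01 u u' (a/2) a) as [xi2 [Hxi2 Hu2]]; try lra; auto.
    assert (Hup : W a <= Dd * psi2 (Cc / (a/2)) * phi (u a)).
    { pose proof (Wdec xi2 a ltac:(lra) ltac:(lra) ltac:(lra)).
      pose proof (Hupos (a/2) ltac:(lra)).
      pose proof (upper_est phi psi1 psi2 (u' xi2) (a/2) (u a) (c xi2) Cc (d xi2) Dd
        Hphi HA (Hu'pos xi2 ltac:(lra)) ltac:(lra) ltac:(replace (a - a/2) with (a/2) in Hu2 by field; lra)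
        (proj1 (Hcd xi2 ltac:(lra))) (HCc xi2 ltac:(lra)) (proj2 (Hcd xi2 ltac:(lra))) (HDd xi2 ltac:(lra))).
      unfold W in H3 |- *. lra. }
    assert (lam <= K1).
    { apply (key_ineq lam _ _ (phi (u a))).
      apply phi_pos; auto. apply Hupos; lra.
      repeat apply Rmult_lt_0_compat; unfold h0; lra. lra. }
    lra.
  -
    assert (Hu'neg : forall t, t0 <= t < 1 -> u' t < 0).
    { intros t Ht. assert (W t < 0).
      { destruct (Req_dec t t0) as [->|Hne]; auto. pose proof (Wdec t0 t). lra. }
      destruct (Hcd t ltac:(lra)) as [Hct Hdt]. unfold W in H3.
      assert (phi (c t * u' t) < 0).
      { destruct (Rle_or_lt 0 (phi (c t * u' t))); auto.
        assert (0 <= d t * phi (c t * u' t)) by (apply Rmult_le_pos; lra). lra. }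
      apply (phi_neg_inv phi Hphi) in H4. nra. }
    destruct (mvt01 W w' t0 b) as [xi [Hxi HWxi]]; try lra; auto.
    destruct (mvt01 u u' xi b) as [eta [Heta Hueta]]; try lra; auto.
    assert (Huxi : u b <= u xi).
    { pose proof (Hu'neg eta ltac:(lra)). nra. }
    assert (Hlow : lam * (h0 * mf * (b - t0)) * phi (u b) <= - W b).
    { assert (Hwx : w' xi = - (lam * h xi * f (u xi))) by (pose proof (Heq xi ltac:(lra)); lra). rewrite Hwx in HWxi.
      assert (HP : mf * phi (u b) <= f (u xi)).
      { pose proof (Hfl (u xi) (Hupos xi ltac:(lra))).
        pose proof (phi_le phi Hphi _ _ Huxi). nra. }
      assert (0 <= mf * phi (u b)).
      { pose proof (phi_pos phi Hphi (u b) (Hupos b ltac:(lra))). nra. }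
      pose proof (prod_lower lam (h xi) (f (u xi)) h0 mf (phi (u b)) (b - t0)
        ltac:(lra) ltac:(lra) (Hhb xi ltac:(lra)) ltac:(unfold h0; lra) HP H3).
      lra. }
    destruct (mvt01 u u' b ((1+b)/2)) as [xi2 [Hxi2 Hu2]]; try lra; auto.
    assert (Hup : - W b <= Dd * psi2 (Cc / ((1-b)/2)) * phi (u b)).
    { pose proof (Wdec b xi2 ltac:(lra) ltac:(lra) ltac:(lra)).
      pose proof (Hupos ((1+b)/2) ltac:(lra)).
      pose proof (Hu'neg xi2 ltac:(lra)).
      pose proof (upper_est phi psi1 psi2 (- u' xi2) ((1-b)/2) (u b) (c xi2) Cc (d xi2) Dd
        Hphi HA ltac:(lra) ltac:(lra) ltac:(replace ((1+b)/2 - b) with ((1-b)/2) in Hu2 by field; lra)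
        (proj1 (Hcd xi2 ltac:(lra))) (HCc xi2 ltac:(lra)) (proj2 (Hcd xi2 ltac:(lra))) (HDd xi2 ltac:(lra))).
      destruct Hphi as [Hodd _].
      replace (c xi2 * - u' xi2) with (- (c xi2 * u' xi2)) in H6 by ring.
      rewrite Hodd in H6.
      unfold W in H3 |- *. lra. }
    assert (lam <= K2).
    { apply (key_ineq lam _ _ (phi (u b))).
      apply phi_pos; auto. apply Hupos; lra.
      repeat apply Rmult_lt_0_compat; unfold h0; lra. lra. }
    lra.
Qed.
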